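(* Let $\varepsilon>0$, $C>0$, and integers $1\le\hat d\le d$. Define the projected random sign (PRS) mechanism on input $\mathbf g\in\mathbb{R}^d$ as follows: draw a random matrix $\mathbf M=(m_{i,j})\in\mathbb{R}^{\hat d\times d}$ independently of everything else with i.i.d. entries equal to $-\sqrt3$ with probability $1/6$, $0$ with probability $2/3$, $+\sqrt3$ with probability $1/6$; set $\mathbf u=\mathbf M\mathbf g$; for each $i\in\{1,\dots,\hat d\}$ let $\bar u_i=\min\{C,\max\{-C,u_i\}\}$ and, independently across $i$, let $\tilde u_i=+C$ with probability $\frac{1}{e^{\varepsilon/\hat d}+1}+\frac{\bar u_i+C}{2C}\cdot\frac{e^{\varepsilon/\hat d}-1}{e^{\varepsilon/\hat d}+1}$ and $\tilde u_i=-C$ otherwise; output $\mathbf M^{\top}\tilde{\mathbf u}\in\mathbb{R}^d$. Consider $N$ agents with private parameters $\psi_1,\dots,\psi_N\in\Psi$ reporting in order $n=1,\dots,N$, where agent $n$ computes a gradient $\mathbf g_n\in\mathbb{R}^d$ whose conditional law given $\psi_1,\dots,\psi_N$ and previous reports $\tilde{\mathbf g}_1,\dots,\tilde{\mathbf g}_{n-1}$ depends only on $\psi_n$ and $\tilde{\mathbf g}_1,\dots,\tilde{\mathbf g}_{n-1}$, and reports $\tilde{\mathbf g}_n$ equal to the output of the PRS mechanism applied to $\mathbf g_n$ with fresh randomness. Then gradient submission with the PRS mechanism satisfies $\varepsilon$-LDP: for every $n$, all $\psi,\psi'\in\Psi$, every value of $(\tilde{\mathbf g}_1,\dots,\tilde{\mathbf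 g}_{n-1})$ and every measurable $G\subseteq\mathbb{R}^d$, $$\Pr(\tilde{\mathbf g}_n\in G\mid\psi_n=\psi,\tilde{\mathbf g}_1,\dots,\tilde{\mathbf g}_{n-1})\le e^{\varepsilon}\Pr(\tilde{\mathbf g}_n\in G\mid\psi_n=\psi',\tilde{\mathbf g}_1,\dots,\tilde{\mathbf g}_{n-1}).$$
   Context: $\Psi$ is an arbitrary set of environment parameters. *)

(* Defs.v *)
From HB Require Import structures.
From mathcomp Require Import all_boot all_order all_algebra.
From mathcomp Require Import all_classical all_reals all_analysis.
Set Implicit Arguments. Unset Strict Implicit. Unset Printing Implicit Defensive.
Import Order.TTheory GRing.Theory Num.Theory.
Import numFieldNormedType.Exports.
Local Open Scope classical_set_scope.
Local Open Scope ring_scope.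

Definition Rd (R : realType) (d : nat) := g_sigma_algebraType (@open 'rV[R]_d).

(* Entries of the projection matrix M are encoded by 'I_3:
   0 |-> -sqrt 3 (prob 1/6), 1 |-> 0 (prob 2/3), 2 |-> +sqrt 3 (prob 1/6). *)
Definition mval (R : realType) (k : 'I_3) : R :=
  if val k == 0%N then - Num.sqrt 3 else if val k == 1%N then 0 else Num.sqrt 3.
Definition mprob (R : realType) (k : 'I_3) : R :=
  if val k == 1%N then 2 / 3 else 1 / 6.

Definition real_mx (R : realType) (dh d : nat) (M : 'M['I_3]_(dh, d)) : 'M[R]_(dh, d) :=
  map_mx (@mval R) M.

Definition mx_prob (R : realType) (dh d : nat) (M : 'M['I_3]_(dh, d)) : R :=
  \prod_(i < dh) \prod_(j < d) mprob R (M i j).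

Definition clip (R : realType) (C x : R) : R := Num.min C (Num.max (- C) x).

Definition p_plus (R : realType) (eps C : R) (dh : nat) (ui : R) : R :=
  let e := expR (eps / dh%:R) in
  1 / (e + 1) + (clip C ui + C) / (2 * C) * ((e - 1) / (e + 1)).

Definition sign_vec (R : realType) (dh : nat) (C : R) (s : 'rV[bool]_dh) : 'rV[R]_dh :=
  \row_i (if s 0 i then C else - C).

(* The PRS mechanism on input g: probability that its output
   M^T tilde u lies in G.  Vectors are rows: u = M g is written g *m M^T,
   and M^T tilde u is written tilde u *m M. *)
Definition prs_prob (R : realType) (eps C : R) (dh d : nat)
    (g : 'rV[R]_d) (G : set 'rV[R]_d) : R :=
  \sum_(M : 'M['I_3]_(dh, d))
    \sum_(s : 'rV[bool]_dh)
      let Mr := real_mx R M in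
      let u := g *m Mr^T in
      mx_prob R M
      * (\prod_(i < dh) (if s 0 i then p_plus eps C dh (u 0 i)
                         else 1 - p_plus eps C dh (u 0 i)))
      * \1_G (sign_vec C s *m Mr).

(* K n psi h is the conditional law of agent n's
   gradient g_n given psi_n = psi and previous reports h = (tilde g_1, ...,
   tilde g_{n-1}) (agents indexed from 0, so agent n has n predecessors). *)
Definition report_cond_prob (R : realType) (eps C : R) (dh d N : nat)
    (Psi : Type)
    (K : forall n : 'I_N, Psi -> n.-tuple 'rV[R]_d -> probability (Rd R d) R)
    (n : 'I_N) (psi : Psi) (h : n.-tuple 'rV[R]_d) (G : set 'rV[R]_d) : \bar R :=
  (\int[K n psi h]_g (prs_prob eps C dh g G)%:E)%E.

(* Main.v *)
Require Import Defs.
From HB Require Import structures.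
From mathcomp Require Import all_boot all_order all_algebra.
From mathcomp Require Import all_classical all_reals all_analysis.
From mathcomp Require Import ring lra.
Import Order.TTheory GRing.Theory Num.Theory.
Import numFieldNormedType.Exports.
Local Open Scope classical_set_scope.
Local Open Scope ring_scope.

Lemma p_bounds (R : realType) (eps C : R) (dh : nat) (x : R) (b : bool) :
  0 < eps -> 0 < C ->
  1 / (expR (eps / dh%:R) + 1) <= (if b then p_plus eps C dh x else 1 - p_plus eps C dh x)
   <= expR (eps / dh%:R) * (1 / (expR (eps / dh%:R) + 1)).
Proof.
move=> he hC; set e := expR (eps / dh%:R).
have e1 : 1 <= e.
  have h0 : 0 <= eps / dh%:R by rewrite divr_ge0 // ltW.
  by apply: le_trans (expR_ge1Dx _); lra.
have hcl1 : - C <= clip C x.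
  rewrite /clip le_min le_max lexx /=; apply/andP; split =>//; lra.
have hcl2 : clip C x <= C by rewrite /clip ge_min lexx.
set t := (clip C x + C) / (2 * C).
have t0 : 0 <= t by rewrite /t divr_ge0 //; lra.
have t1 : t <= 1 by rewrite /t ler_pdivrMr; lra.
have hp : p_plus eps C dh x = 1 / (e + 1) + t * ((e - 1) / (e + 1)) by [].
have ep : 0 < e + 1 by lra.
have key : forall p, p = 1 / (e + 1) + t * ((e - 1) / (e + 1)) ->
  (1 / (e + 1) <= p <= e * (1 / (e + 1))) /\
  (1 / (e + 1) <= 1 - p <= e * (1 / (e + 1))).
  move=> p ->.
  have ha : 0 < (e + 1)^-1 by rewrite invr_gt0.
  rewrite /= !div1r.
  set a := (e + 1)^-1 in ha *.
  have hb : 0 <= t * ((e - 1) * a) by rewrite mulr_ge0 // mulr_ge0 //; lra.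
  have hb2 : t * ((e - 1) * a) <= (e - 1) * a by rewrite ler_piMl // mulr_ge0 //; lra.
  have hea : e * a = a + (e - 1) * a by ring.
  have ha1 : a * (e + 1) = 1 by rewrite /a mulVf //; lra.
  have hea2 : a + (e - 1) * a + a = 1 by rewrite -[RHS]ha1; ring.
  rewrite hea.
  split; apply/andP; split; lra.
have [k1 k2] := key _ hp.
by case: b.
Qed.
Lemma int_mono d (T : measurableType d) (R : realType) (mu : {measure set T -> \bar R})
  (f g : T -> \bar R) : (forall x, (0 <= f x)%E) -> (forall x, (f x <= g x)%E) ->
  (\int[mu]_x f x <= \int[mu]_x g x)%E.
Proof.
move=> f0 fg.
have g0 : forall x, (0 <= g x)%E by move=> x; apply: le_trans (fg x).
rewrite !ge0_integralTE //=.
apply: le_ereal_sup => _ [h hf <-]; exists h => //= x.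
exact: le_trans (hf x) (fg x).
Qed.

Lemma prs_bounds (R : realType) (eps C : R) (dh d : nat) (G : set 'rV[R]_d) :
  0 < eps -> 0 < C -> (1 <= dh)%N ->
  let a := 1 / (expR (eps / dh%:R) + 1) in
  let A := \sum_(M : 'M['I_3]_(dh, d)) \sum_(s : 'rV[bool]_dh)
      mx_prob R M * a ^+ dh * \1_G (sign_vec C s *m real_mx R M) in
  0 <= A /\ forall g, A <= prs_prob eps C dh g G <= expR eps * A.
Proof.
move=> he hC hdh a A.
set e := expR (eps / dh%:R).
have ha : 0 <= a by rewrite /a divr_ge0 // addr_ge0 // expR_ge0.
have hee : e ^+ dh = expR eps.
  rewrite /e -expRM_natr mulfVK //.
  by rewrite pnatr_eq0 -lt0n.
have mp0 : forall M : 'M['I_3]_(dh, d), 0 <= mx_prob R M.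
  move=> M; rewrite /mx_prob; apply: prodr_ge0 => i _; apply: prodr_ge0 => j _.
  by rewrite /mprob; case: ifP => _; rewrite divr_ge0.
have ind0 : forall x, 0 <= \1_G x :> R.
  by move=> x; rewrite /indic; case: (x \in G).
split.
  apply: sumr_ge0 => M _; apply: sumr_ge0 => s _.
  by rewrite mulr_ge0 // mulr_ge0 // exprn_ge0.
move=> g; rewrite /A /prs_prob mulr_sumr; apply/andP; split;
  apply: ler_sum => M _; rewrite ?mulr_sumr; apply: ler_sum => s _ /=.
- rewrite ler_wpM2r // ler_wpM2l //.
  have -> : a ^+ dh = \prod_(i < dh) a by rewrite prodr_const card_ord.
  apply: ler_prod => i _; rewrite ha /=.
  by case/andP: (p_bounds _ _ _ dh ((g *m (real_mx R M)^T) 0 i) (s 0 i) he hC).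
- rewrite -hee !mulrA [e ^+ dh * _]mulrC -[mx_prob R M * e ^+ dh * a ^+ dh]mulrA -exprMn.
  rewrite ler_wpM2r // ler_wpM2l //.
  have -> : (e * a) ^+ dh = \prod_(i < dh) (e * a) by rewrite prodr_const card_ord.
  apply: ler_prod => i _.
  have /andP[h1 h2] := p_bounds _ _ _ dh ((g *m (real_mx R M)^T) 0 i) (s 0 i) he hC.
  by rewrite h2 andbT; apply: le_trans h1.
Qed.

Theorem lemma3 (R : realType) (eps C : R) (dh d N : nat) (Psi : Type)
    (K : forall n : 'I_N, Psi -> n.-tuple 'rV[R]_d -> probability (Rd R d) R) :
  0 < eps -> 0 < C -> (1 <= dh)%N -> (dh <= d)%N ->
  forall (n : 'I_N) (psi psi' : Psi) (h : n.-tuple 'rV[R]_d) (G : set (Rd R d)),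
    measurable G ->
    (report_cond_prob eps C dh K psi h G
       <= (expR eps)%:E * report_cond_prob eps C dh K psi' h G)%E.
Proof.
move=> he hC hdh _ n psi psi' h G _.
have B := @prs_bounds R eps C dh d G he hC hdh.
case: B => A0 B; move: A0 B; set A := (X in 0 <= X -> _) => A0 B.
rewrite /report_cond_prob.
apply: (@le_trans _ _ (\int[K n psi h]_(x in setT) (cst (expR eps * A)%:E) x)%E).
  apply: int_mono => g /=; first by rewrite lee_fin; case/andP: (B g) => h1 _; exact: le_trans h1.
  by rewrite lee_fin; case/andP: (B g).
rewrite integral_cst //.
set X := (X in (_ * X <= _)%E).
have -> : X = 1%E by rewrite /X; exact: probability_setT.
rewrite mule1 EFinM.
apply: lee_wpmul2l; first by rewrite lee_fin expR_ge0.
apply: (@le_trans _ _ (\int[K n psi' h]_(x in setT) (cst A%:E) x)%E).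
  rewrite integral_cst //.
  set X' := (X in (_ * X)%E).
  have -> : X' = 1%E by rewrite /X'; exact: probability_setT.
  by rewrite mule1.
apply: int_mono => g /=; first by rewrite lee_fin.
by rewrite lee_fin; case/andP: (B g).
Qed.
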